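(* Every indecomposable tournament with at least $5$ vertices having at most one non-critical vertex has an odd number of vertices.
   Context: A tournament $T=(V,A)$: finite vertex set, and for all distinct $x,y$ exactly one of $(x,y),(y,x)$ is an arc; write $x\to y$ for $(x,y)\in A$. $T-x=T[V\setminus\{x\}]$ is the induced subtournament. An interval of $T$ is $I\subseteq V$ such that for every $x\in V\setminus I$, either $x\to a$ for all $a\in I$ or $a\to x$ for all $a\in I$; trivial intervals are $\varnothing$, $V$, singletons; $T$ (with $\geqslant 3$ vertices) is indecomposable if all its intervals are trivial, decomposable otherwise. A vertex $x$ of an indecomposable tournament $T$ is critical if $T-x$ is decomposable, and non-critical otherwise. *)

(* Defs.v *)
From mathcomp Require Import all_boot.
Set Implicit Arguments. Unset Strict Implicit. Unset Printing Implicit Defensive.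

(* A tournament is given by a vertex set V : {set T} over a finite type T and
   an arc relation A : rel T ("A x y" means x -> y); only its restriction to V
   matters.  The induced subtournament T[W] for W \subset V is (W, A). *)
Definition is_tournament (T : finType) (A : rel T) (V : {set T}) : Prop :=
  forall x y, x \in V -> y \in V -> x != y -> (A x y (+) A y x).

Definition is_interval (T : finType) (A : rel T) (V I : {set T}) : Prop :=
  I \subset V /\
  forall x, x \in V :\: I ->
    (forall a, a \in I -> A x a) \/ (forall a, a \in I -> A a x).

Definition trivial_interval (T : finType) (V I : {set T}) : Prop :=
  I = set0 \/ I = V \/ exists a, I = [set a].

Definition indecomposable (T : finType) (A : rel T) (V : {set T}) : Prop :=
  3 <= #|V| /\ forall I, is_interval A V I -> trivial_interval V I.

Definition critical (T : finType) (A : rel T) (V : {set T}) (x : T) : Prop :=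
  ~ indecomposable A (V :\ x).

Definition non_critical (T : finType) (A : rel T) (V : {set T}) (x : T) : Prop :=
  x \in V /\ ~ critical A V x.

(* Main.v *)
Require Import Defs.
From mathcomp Require Import all_boot zify.
From Stdlib Require Import Classical.
Set Implicit Arguments. Unset Strict Implicit. Unset Printing Implicit Defensive.

Lemma AN (T : finType) (A : rel T) (V : {set T}) x y :
  is_tournament A V -> x \in V -> y \in V -> x != y -> A y x = ~~ A x y.
Proof. by move=> tour xV yV xy; move: (tour x y xV yV xy); case: (A x y); case: (A y x). Qed.

Definition itv (T : finType) (A : rel T) (Y I : {set T}) : bool :=
  (I \subset Y) && [forall z in Y :\: I, forall p in I, forall q in I, A z p == A z q].

Lemma itvP (T : finType) (A : rel T) (Y I : {set T}) :
  reflect (I \subset Y /\ forall z p q, z \in Y -> z \notin I -> p \in I -> q \in I -> A z p = A z q)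
          (itv A Y I).
Proof.
apply: (iffP andP) => [[sub /forall_inP H]|[sub H]]; split=> //.
- move=> z p q zY zI pI qI.
  have zD : z \in Y :\: I by rewrite inE zI zY.
  by have /forall_inP/(_ p pI)/forall_inP/(_ q qI)/eqP := H z zD.
- apply/forall_inP => z; rewrite inE => /andP[zI zY].
  apply/forall_inP => p pI; apply/forall_inP => q qI; apply/eqP; exact: H.
Qed.

Lemma interval_itv (T : finType) (A : rel T) (V Y I : {set T}) :
  is_tournament A V -> Y \subset V -> is_interval A Y I <-> itv A Y I.
Proof.
move=> tour YV; split.
- move=> [sub H]; apply/itvP; split=> // z p q zY zI pI qI.
  have zV : z \in V by apply: (subsetP YV).
  have pV : p \in V by apply: (subsetP YV); apply: (subsetP sub).
  have qV : q \in V by apply: (subsetP YV); apply: (subsetP sub).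
  have zp : z != p by apply/eqP => e; rewrite e pI in zI.
  have zq : z != q by apply/eqP => e; rewrite e qI in zI.
  have zD : z \in Y :\: I by rewrite inE zI zY.
  case: (H z zD) => Hz; first by rewrite !Hz.
  by rewrite (AN tour pV zV) 1?eq_sym // (AN tour qV zV) 1?eq_sym // !Hz.
- move/itvP=> [sub H]; split=> // z; rewrite inE => /andP[zI zY].
  have zV : z \in V by apply: (subsetP YV).
  case: (set_0Vmem I) => [->|[p0 p0I]].
    by left => a; rewrite inE.
  case Hz: (A z p0).
    by left => a aI; rewrite (H z a p0).
  right => a aI.
  have aV : a \in V by apply: (subsetP YV); apply: (subsetP sub).
  have za : z != a by apply/eqP => e; rewrite e aI in zI.
  by rewrite (AN tour zV aV za) (H z a p0) ?Hz.
Qed.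

Lemma indec_triv (T : finType) (A : rel T) (V Y I : {set T}) :
  is_tournament A V -> Y \subset V -> indecomposable A Y -> itv A Y I -> trivial_interval Y I.
Proof. by move=> tour YV [_ H] HI; apply: H; apply/(interval_itv I tour YV). Qed.

Lemma triv_indec (T : finType) (A : rel T) (V Y : {set T}) :
  is_tournament A V -> Y \subset V -> 3 <= #|Y| ->
  (forall I, itv A Y I -> trivial_interval Y I) -> indecomposable A Y.
Proof. by move=> tour YV h3 H; split=> // I /(interval_itv I tour YV); apply: H. Qed.

Lemma nontriv (T : finType) (Y I : {set T}) :
  2 <= #|I| -> #|I| < #|Y| -> ~ trivial_interval Y I.
Proof.
move=> h1 h2 [E|[E|[a E]]]; rewrite E in h1 h2.
- by rewrite cards0 in h1.
- by rewrite ltnn in h2.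
- by rewrite cards1 in h1.
Qed.

Lemma ind_nt (T : finType) (A : rel T) (V Z K : {set T}) :
  is_tournament A V -> Z \subset V -> indecomposable A Z -> itv A Z K ->
  2 <= #|K| -> #|K| < #|Z| -> False.
Proof. by move=> tour ZV iZ HK h1 h2; apply: (nontriv h1 h2); exact: (indec_triv tour ZV iZ HK). Qed.

Lemma sub_itv (T : finType) (A : rel T) (Y I Z K : {set T}) :
  itv A Y I -> Z \subset Y -> K \subset Z -> K \subset I ->
  (forall z, z \in Z -> z \notin K -> z \notin I) -> itv A Z K.
Proof.
move=> /itvP[IY H] ZY KZ KI HZ; apply/itvP; split=> // z p q zZ zK pK qK.
apply: (H z p q); [exact: (subsetP ZY) | exact: HZ | exact: (subsetP KI) | exact: (subsetP KI)].
Qed.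

Lemma restr_cases (T : finType) (A : rel T) (V Y I Z : {set T}) :
  is_tournament A V -> Y \subset V -> Z \subset Y -> itv A Y I -> indecomposable A Z ->
  (forall x, x \in Z -> x \notin I) \/ (forall x, x \in Z -> x \in I) \/
  (exists c, c \in Z /\ c \in I /\ forall x, x \in Z -> x \in I -> x = c).
Proof.
move=> tour YV ZY HI iZ.
have ZV : Z \subset V by apply: subset_trans YV.
have : trivial_interval Z (I :&: Z).
  apply: (indec_triv tour ZV iZ); apply: (sub_itv HI ZY) => //.
  - exact: subsetIr.
  - exact: subsetIl.
  by move=> z zZ; rewrite inE zZ andbT.
case=> [H|[H|[c H]]].
- left => x xZ; apply/negP => xI.
  have : x \in I :&: Z by rewrite inE xI.
  by rewrite H inE.
- right; left => x xZ.
  have : x \in I :&: Z by rewrite H.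
  by rewrite inE => /andP[].
- right; right; exists c.
  have : c \in I :&: Z by rewrite H set11.
  rewrite inE => /andP[cI cZ]; split=> //; split=> // x xZ xI.
  have : x \in I :&: Z by rewrite inE xI.
  by rewrite H inE => /eqP.
Qed.

Lemma triv0 (T : finType) (Y I : {set T}) :
  (forall x, x \in I -> False) -> trivial_interval Y I.
Proof. by move=> H; left; apply/setP => x; rewrite inE; apply/negbTE/negP => /H. Qed.

Lemma triv1 (T : finType) (Y I : {set T}) c :
  c \in I -> (forall x, x \in I -> x = c) -> trivial_interval Y I.
Proof.
move=> cI H; right; right; exists c; apply/setP => x; rewrite inE.
by apply/idP/eqP => [/H //|->].
Qed.

Lemma trivY (T : finType) (Y I : {set T}) :
  I \subset Y -> (forall x, x \in Y -> x \in I) -> trivial_interval Y I.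
Proof.
move=> sub H; right; left; apply/eqP; rewrite eqEsubset sub /=.
by apply/subsetP.
Qed.

Lemma lem_a (T : finType) (A : rel T) (V X : {set T}) u a :
  is_tournament A V -> X \subset V -> u \in V -> u \notin X -> a \in X ->
  indecomposable A X -> itv A (u |: X) [set a; u] -> itv A (u |: X) X -> False.
Proof.
move=> tour XV uV uX aX iX /itvP[_ H1] /itvP[_ H2].
have aV : a \in V := subsetP XV a aX.
have key : forall p, p \in X -> p != a -> A a p = A u p.
  move=> p pX pa; have pV := subsetP XV p pX.
  have pu : p != u by apply: contraNneq uX => <-.
  have E : A p a = A p u.
    by apply: H1; rewrite !inE ?eqxx ?orbT ?pX ?(negbTE pa) ?(negbTE pu).
  by rewrite (AN tour pV aV pa) (AN tour pV uV pu) E.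
have : itv A X (X :\ a).
  apply/itvP; split; first exact: subsetDl.
  move=> z p q zX zXa pXa qXa.
  move: zXa; rewrite !inE zX andbT negbK => /eqP ->.
  move: pXa qXa; rewrite !inE => /andP[pa pX] /andP[qa qX].
  rewrite (key p pX pa) (key q qX qa); apply: H2 => //; by rewrite !inE ?eqxx.
move=> HI; apply: (ind_nt tour XV iX HI).
- have := cardsD1 a X; rewrite aX; have := iX.1; lia.
- have := cardsD1 a X; rewrite aX; lia.
Qed.

Lemma lem_b (T : finType) (A : rel T) (V X : {set T}) u a c :
  is_tournament A V -> X \subset V -> u \in V -> u \notin X -> a \in X -> c \in X -> a != c ->
  indecomposable A X -> itv A (u |: X) [set a; u] -> itv A (u |: X) [set c; u] -> False.
Proof.
move=> tour XV uV uX aX cX ac iX /itvP[_ H1] /itvP[_ H2].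
have : itv A X [set a; c].
  apply/itvP; split.
    by apply/subsetP => x; rewrite !inE => /orP[] /eqP ->.
  move=> z p q zX; rewrite !inE negb_or => /andP[za zc].
  have zu : z != u by apply: contraNneq uX => <-.
  have zY : z \in u |: X by rewrite inE zX orbT.
  have Ea : A z a = A z u.
    by apply: H1; rewrite !inE ?eqxx ?orbT ?zX ?(negbTE za) ?(negbTE zu).
  have Ec : A z c = A z u.
    by apply: H2; rewrite !inE ?eqxx ?orbT ?zX ?(negbTE zc) ?(negbTE zu).
  by move=> /orP[] /eqP -> /orP[] /eqP ->; rewrite ?Ea ?Ec.
move=> HI; apply: (ind_nt tour XV iX HI).
- by rewrite cards2 ac.
- by rewrite cards2 ac; have := iX.1.
Qed.

Lemma sub2 (T : finType) (S : {set T}) a b : a \in S -> b \in S -> [set a; b] \subset S.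
Proof. by move=> aS bS; apply/subsetP => x; rewrite !inE => /orP[] /eqP ->. Qed.

Lemma ext_or (T : finType) (A : rel T) (V X : {set T}) y :
  is_tournament A V -> X \subset V -> y \in V -> y \notin X -> indecomposable A X ->
  ~~ itv A (y |: X) X -> (forall a, a \in X -> ~~ itv A (y |: X) [set a; y]) ->
  indecomposable A (y |: X).
Proof.
move=> tour XV yV yX iX nP nXa.
have YV : y |: X \subset V by rewrite subUset sub1set yV XV.
apply: (triv_indec tour YV); first by rewrite cardsU1 yX; have := iX.1; lia.
move=> I HI; have /itvP[IY _] := HI.
have XY : X \subset y |: X := subsetUr _ _.
have mem : forall x, x \in I -> x = y \/ x \in X.
  by move=> x /(subsetP IY); rewrite !inE => /orP[/eqP|]; auto.
case: (restr_cases tour YV XY HI iX) => [C0|[CX|[c [cX [cI Cc]]]]].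
- case yI: (y \in I).
  + apply: (triv1 _ yI) => x xI; case: (mem x xI) => [//|xX].
    by move: (C0 x xX); rewrite xI.
  + apply: triv0 => x xI; case: (mem x xI) => [e|xX].
      by move: xI; rewrite e yI.
    by move: (C0 x xX); rewrite xI.
- case yI: (y \in I).
  + apply: trivY => // x; rewrite !inE => /orP[/eqP->//|]; exact: CX.
  + exfalso; move/negP: nP; apply; apply: (sub_itv HI) => //.
    * by apply/subsetP => x; apply: CX.
    * by move=> z; rewrite !inE => /orP[/eqP->|->//]; rewrite yI.
- case yI: (y \in I).
  + exfalso; move/negP: (nXa c cX); apply; apply: (sub_itv HI (subxx _)).
    * by apply: sub2; rewrite !inE ?eqxx ?cX ?orbT.
    * exact: sub2.
    * move=> z; rewrite !inE negb_or => /orP[/eqP->|zX] /andP[zc zy].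
        by rewrite eqxx in zy.
      by apply/negP => zI; rewrite (Cc z zX zI) eqxx in zc.
  + apply: (triv1 _ cI) => x xI; case: (mem x xI) => [e|xX].
      by move: xI; rewrite e yI.
    exact: Cc.
Qed.

Lemma key_lem (T : finType) (A : rel T) (V X : {set T}) u w a :
  is_tournament A V -> X \subset V -> u \in V -> w \in V -> u \notin X -> w \notin X ->
  u != w -> a \in X -> indecomposable A X ->
  itv A (u |: X) [set a; u] -> ~~ itv A (w |: X) [set a; w] -> A w a != A w u ->
  indecomposable A (u |: (w |: X)).
Proof.
move=> tour XV uV wV uX wX uw aX iX Hu Hw Hd.
have aV := subsetP XV a aX.
have /itvP[_ Hu'] := Hu.
have YV : u |: (w |: X) \subset V by rewrite !subUset !sub1set uV wV XV.
have XY : X \subset u |: (w |: X) by apply/subsetP => x xX; rewrite !inE xX !orbT.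
have uXY : u |: X \subset u |: (w |: X).
  by apply/subsetP => x; rewrite !inE => /orP[->|->]; rewrite ?orbT.
have wXY : w |: X \subset u |: (w |: X).
  by apply/subsetP => x; rewrite !inE => /orP[->|->]; rewrite ?orbT.
have neX : forall x, x \in X -> (x != u) && (x != w).
  by move=> x xX; apply/andP; split; [apply: contraNneq uX => <- | apply: contraNneq wX => <-].
apply: (triv_indec tour YV).
  exact: leq_trans iX.1 (subset_leq_card XY).
move=> I HI; have /itvP[IY HI'] := HI.
have mem : forall x, x \in I -> x = u \/ x = w \/ x \in X.
  by move=> x /(subsetP IY); rewrite !inE => /orP[/eqP|/orP[/eqP|]]; auto.
have inY : forall x, x \in X -> x \in u |: (w |: X) by move=> x /(subsetP XY).
have uY : u \in u |: (w |: X) by rewrite !inE eqxx.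
have wY : w \in u |: (w |: X) by rewrite !inE eqxx orbT.
case: (restr_cases tour YV XY HI iX) => [C0|[CX|[c [cX [cI Cc]]]]].
- case uI: (u \in I); case wI: (w \in I).
  + exfalso; move/negP: Hw; apply; apply/itvP; split.
      by apply: sub2; rewrite !inE ?eqxx ?aX ?orbT.
    move=> z p q; rewrite !inE => /orP[/eqP->|zX]; first by rewrite eqxx orbT.
    rewrite negb_or => /andP[za zw].
    have /andP[zu _] := neX z zX.
    have E1 : A z a = A z u.
      by apply: Hu'; rewrite !inE ?eqxx ?orbT ?zX ?(negbTE za) ?(negbTE zu).
    have E2 : A z u = A z w by apply: HI' => //; [exact: inY | exact: C0].
    by move=> /orP[]/eqP-> /orP[]/eqP->; rewrite ?E1 ?E2.
  + apply: (triv1 _ uI) => x xI; case: (mem x xI) => [//|[e|xX]].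
      by move: xI; rewrite e wI.
    by move: (C0 x xX); rewrite xI.
  + apply: (triv1 _ wI) => x xI; case: (mem x xI) => [e|[//|xX]].
      by move: xI; rewrite e uI.
    by move: (C0 x xX); rewrite xI.
  + apply: triv0 => x xI; case: (mem x xI) => [e|[e|xX]].
    * by move: xI; rewrite e uI.
    * by move: xI; rewrite e wI.
    * by move: (C0 x xX); rewrite xI.
- case uI: (u \in I); last first.
    exfalso; apply: (lem_a tour XV uV uX aX iX Hu).
    apply: (sub_itv HI uXY (subsetUr _ _)).
      by apply/subsetP => x; apply: CX.
    by move=> z; rewrite !inE => /orP[/eqP->|->//]; rewrite uI.
  case wI: (w \in I).
  + apply: trivY => // x; rewrite !inE => /orP[/eqP->//|/orP[/eqP->//|]]; exact: CX.
  + exfalso; move/negP: Hd; apply; apply/eqP; apply: HI' => //; first by rewrite wI.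
    exact: CX.
- case uI: (u \in I).
  + have Hcu : itv A (u |: X) [set c; u].
      apply: (sub_itv HI uXY).
      * by apply: sub2; rewrite !inE ?eqxx ?cX ?orbT.
      * exact: sub2.
      * move=> z; rewrite !inE negb_or => /orP[/eqP->|zX] /andP[zc zy].
          by rewrite eqxx in zy.
        by apply/negP => zI; rewrite (Cc z zX zI) eqxx in zc.
    have ca : c = a.
      case: (eqVneq a c) => [->//|ac]; exfalso.
      exact: (lem_b tour XV uV uX aX cX ac iX Hu Hcu).
    subst c; case wI: (w \in I).
    * exfalso; move/negP: Hw; apply; apply: (sub_itv HI wXY).
      -- by apply: sub2; rewrite !inE ?eqxx ?aX ?orbT.
      -- exact: sub2.
      -- move=> z; rewrite !inE negb_or => /orP[/eqP->|zX] /andP[zc zy].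
           by rewrite eqxx in zy.
         by apply/negP => zI; rewrite (Cc z zX zI) eqxx in zc.
    * exfalso; move/negP: Hd; apply; apply/eqP; apply: HI' => //; by rewrite wI.
  + case wI: (w \in I).
    * have Hcw : itv A (w |: X) [set c; w].
        apply: (sub_itv HI wXY).
        -- by apply: sub2; rewrite !inE ?eqxx ?cX ?orbT.
        -- exact: sub2.
        -- move=> z; rewrite !inE negb_or => /orP[/eqP->|zX] /andP[zc zy].
             by rewrite eqxx in zy.
           by apply/negP => zI; rewrite (Cc z zX zI) eqxx in zc.
      case: (eqVneq c a) => [e|ca].
        by subst c; rewrite Hcw in Hw.
      exfalso.
      have /itvP[_ Hcw'] := Hcw.
      have cV := subsetP XV c cX.
      have /andP[cu cw] := neX c cX.
      have /andP[au aw] := neX a aX.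
      have E1 : A a c = A a w.
        have ac : a != c by rewrite eq_sym.
        by apply: Hcw'; rewrite !inE ?eqxx ?orbT ?aX ?(negbTE ac) ?(negbTE aw).
      have E2 : A c a = A c u.
        by apply: Hu'; rewrite !inE ?eqxx ?orbT ?cX ?(negbTE ca) ?(negbTE cu).
      have E3 : A u c = A u w by apply: HI' => //; rewrite uI.
      move: Hd.
      rewrite (AN tour aV wV aw) -E1 -(AN tour aV cV _); last by rewrite eq_sym.
      rewrite E2 (AN tour uV cV _); last by rewrite eq_sym.
      by rewrite E3 -(AN tour uV wV uw) eqxx.
    * apply: (triv1 _ cI) => x xI; case: (mem x xI) => [e|[e|xX]].
      -- by move: xI; rewrite e uI.
      -- by move: xI; rewrite e wI.
      -- exact: Cc.
Qed.

Lemma EE_lem (T : finType) (A : rel T) (V X : {set T}) u w p :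
  is_tournament A V -> X \subset V -> u \in V -> w \in V -> u \notin X -> w \notin X ->
  u != w -> indecomposable A (u |: X) -> indecomposable A (w |: X) -> p \in X ->
  A u p != A w p -> indecomposable A (u |: (w |: X)).
Proof.
move=> tour XV uV wV uX wX uw iU iW pX Hd.
have pV := subsetP XV p pX.
have YV : u |: (w |: X) \subset V by rewrite !subUset !sub1set uV wV XV.
have XY : X \subset u |: (w |: X) by apply/subsetP => x xX; rewrite !inE xX !orbT.
have uXY : u |: X \subset u |: (w |: X).
  by apply/subsetP => x; rewrite !inE => /orP[->|->]; rewrite ?orbT.
have wXY : w |: X \subset u |: (w |: X).
  by apply/subsetP => x; rewrite !inE => /orP[->|->]; rewrite ?orbT.
have wXV : w |: X \subset V by rewrite subUset sub1set wV XV.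
have neX : forall x, x \in X -> (x != u) && (x != w).
  by move=> x xX; apply/andP; split; [apply: contraNneq uX => <- | apply: contraNneq wX => <-].
have cW : #|w |: X| = #|X|.+1 by rewrite cardsU1 wX.
have cU : #|u |: X| = #|X|.+1 by rewrite cardsU1 uX.
have X2 : 2 <= #|X| by have := iU.1; rewrite cU.
apply: (triv_indec tour YV).
  exact: leq_trans iU.1 (subset_leq_card uXY).
move=> I HI; have /itvP[IY HI'] := HI.
have mem : forall x, x \in I -> x = u \/ x = w \/ x \in X.
  by move=> x /(subsetP IY); rewrite !inE => /orP[/eqP|/orP[/eqP|]]; auto.
have inY : forall x, x \in X -> x \in u |: (w |: X) by move=> x /(subsetP XY).
have uY : u \in u |: (w |: X) by rewrite !inE eqxx.
have wY : w \in u |: (w |: X) by rewrite !inE eqxx orbT.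
have uU : u \in u |: X by rewrite !inE eqxx.
have XU : forall x, x \in X -> x \in u |: X by move=> x xX; rewrite !inE xX orbT.
case: (restr_cases tour YV uXY HI iU) => [C0|[CX|[c [cU' [cI Cc]]]]].
- case wI: (w \in I).
  + apply: (triv1 _ wI) => x xI; case: (mem x xI) => [e|[//|xX]].
      by move: (C0 u uU); rewrite -e xI.
    by move: (C0 x (XU x xX)); rewrite xI.
  + apply: triv0 => x xI; case: (mem x xI) => [e|[e|xX]].
    * by move: (C0 u uU); rewrite -e xI.
    * by move: xI; rewrite e wI.
    * by move: (C0 x (XU x xX)); rewrite xI.
- case wI: (w \in I).
  + apply: trivY => // x; rewrite !inE => /orP[/eqP->|/orP[/eqP->//|xX]].
      exact: CX.
    exact: CX (XU x xX).
  + exfalso; apply: (ind_nt tour wXV iW _ X2); last by rewrite cW.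
    apply: (sub_itv HI wXY (subsetUr _ _)).
      by apply/subsetP => x xX; apply: CX (XU x xX).
    by move=> z; rewrite !inE => /orP[/eqP->|->//]; rewrite wI.
- case: (eqVneq c u) => [e|cu].
  + subst c; case wI: (w \in I).
    * exfalso; move: Hd.
      have /andP[pu pw] := neX p pX.
      have pI : p \notin I by apply/negP => pI; move: (Cc p (XU p pX) pI) => e; rewrite e eqxx in pu.
      have E : A p u = A p w by apply: HI' => //; exact: inY.
      by rewrite (AN tour pV uV pu) (AN tour pV wV pw) E eqxx.
    * apply: (triv1 _ cI) => x xI; case: (mem x xI) => [//|[e|xX]].
        by move: xI; rewrite e wI.
      exact: Cc (XU x xX) xI.
  + have cX : c \in X by move: cU'; rewrite !inE (negbTE cu).
    have uI : u \notin I by apply/negP => uI; move: (Cc u uU uI) => e; rewrite e eqxx in cu.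
    case wI: (w \in I).
    * exfalso; apply: (ind_nt tour wXV iW (K := [set c; w])).
      -- apply: (sub_itv HI wXY).
         ++ by apply: sub2; rewrite !inE ?eqxx ?cX ?orbT.
         ++ exact: sub2.
         ++ move=> z; rewrite !inE negb_or => /orP[/eqP->|zX] /andP[zc zy].
              by rewrite eqxx in zy.
            by apply/negP => zI; rewrite (Cc z (XU z zX) zI) eqxx in zc.
      -- have /andP[_ cw] := neX c cX; by rewrite cards2 cw.
      -- have /andP[_ cw] := neX c cX; by rewrite cards2 cw cW ltnS.
    * apply: (triv1 _ cI) => x xI; case: (mem x xI) => [e|[e|xX]].
      -- by move: xI; rewrite e (negbTE uI).
      -- by move: xI; rewrite e wI.
      -- exact: Cc (XU x xX) xI.
Qed.

Lemma EP_lem (T : finType) (A : rel T) (V X : {set T}) u w p :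
  is_tournament A V -> X \subset V -> u \in V -> w \in V -> u \notin X -> w \notin X ->
  u != w -> indecomposable A X -> indecomposable A (u |: X) -> itv A (w |: X) X -> p \in X ->
  A w p != A w u -> indecomposable A (u |: (w |: X)).
Proof.
move=> tour XV uV wV uX wX uw iX iU HwX pX Hd.
have pV := subsetP XV p pX.
have YV : u |: (w |: X) \subset V by rewrite !subUset !sub1set uV wV XV.
have XY : X \subset u |: (w |: X) by apply/subsetP => x xX; rewrite !inE xX !orbT.
have uXY : u |: X \subset u |: (w |: X).
  by apply/subsetP => x; rewrite !inE => /orP[->|->]; rewrite ?orbT.
have wXY : w |: X \subset u |: (w |: X).
  by apply/subsetP => x; rewrite !inE => /orP[->|->]; rewrite ?orbT.
have uXV : u |: X \subset V by rewrite subUset sub1set uV XV.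
have neX : forall x, x \in X -> (x != u) && (x != w).
  by move=> x xX; apply/andP; split; [apply: contraNneq uX => <- | apply: contraNneq wX => <-].
have cU : #|u |: X| = #|X|.+1 by rewrite cardsU1 uX.
have X2 : 2 <= #|X| by have := iU.1; rewrite cU.
have /itvP[_ Hw'] := HwX.
apply: (triv_indec tour YV).
  exact: leq_trans iU.1 (subset_leq_card uXY).
move=> I HI; have /itvP[IY HI'] := HI.
have mem : forall x, x \in I -> x = u \/ x = w \/ x \in X.
  by move=> x /(subsetP IY); rewrite !inE => /orP[/eqP|/orP[/eqP|]]; auto.
have inY : forall x, x \in X -> x \in u |: (w |: X) by move=> x /(subsetP XY).
have uY : u \in u |: (w |: X) by rewrite !inE eqxx.
have wY : w \in u |: (w |: X) by rewrite !inE eqxx orbT.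
have uU : u \in u |: X by rewrite !inE eqxx.
have XU : forall x, x \in X -> x \in u |: X by move=> x xX; rewrite !inE xX orbT.
case: (restr_cases tour YV uXY HI iU) => [C0|[CX|[c [cU' [cI Cc]]]]].
- case wI: (w \in I).
  + apply: (triv1 _ wI) => x xI; case: (mem x xI) => [e|[//|xX]].
      by move: (C0 u uU); rewrite -e xI.
    by move: (C0 x (XU x xX)); rewrite xI.
  + apply: triv0 => x xI; case: (mem x xI) => [e|[e|xX]].
    * by move: (C0 u uU); rewrite -e xI.
    * by move: xI; rewrite e wI.
    * by move: (C0 x (XU x xX)); rewrite xI.
- case wI: (w \in I).
  + apply: trivY => // x; rewrite !inE => /orP[/eqP->|/orP[/eqP->//|xX]].
      exact: CX.
    exact: CX (XU x xX).
  + exfalso; move/negP: Hd; apply; apply/eqP; apply: HI' => //.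
    * by rewrite wI.
    * exact: CX (XU p pX).
    * exact: CX.
- case: (eqVneq c u) => [e|cu].
  + subst c; case wI: (w \in I).
    * exfalso.
      have notI : forall q, q \in X -> q \notin I.
        move=> q qX; apply/negP => qI; move: (Cc q (XU q qX) qI) => e.
        by move: qX; rewrite e (negbTE uX).
      have f : forall q, q \in X -> A u q = A w q.
        move=> q qX; have qV := subsetP XV q qX; have /andP[qu qw] := neX q qX.
        rewrite (AN tour qV uV qu) (AN tour qV wV qw); congr negb.
        by apply: HI' => //; [exact: inY | exact: notI].
      apply: (ind_nt tour uXV iU (K := X)) => //; last by rewrite cU.
      apply/itvP; split; first exact: subsetUr.
      move=> z p1 q1; rewrite !inE => /orP[/eqP->|->//] _ p1X q1X.
      rewrite (f p1 p1X) (f q1 q1X); apply: Hw' => //; by rewrite !inE eqxx.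
    * apply: (triv1 _ cI) => x xI; case: (mem x xI) => [//|[e|xX]].
        by move: xI; rewrite e wI.
      exact: Cc (XU x xX) xI.
  + have cX : c \in X by move: cU'; rewrite !inE (negbTE cu).
    have uI : u \notin I by apply/negP => uI; move: (Cc u uU uI) => e; rewrite e eqxx in cu.
    case wI: (w \in I).
    * exfalso; apply: (lem_a tour XV wV wX cX iX _ HwX).
      apply: (sub_itv HI wXY).
      -- by apply: sub2; rewrite !inE ?eqxx ?cX ?orbT.
      -- exact: sub2.
      -- move=> z; rewrite !inE negb_or => /orP[/eqP->|zX] /andP[zc zy].
           by rewrite eqxx in zy.
         by apply/negP => zI; rewrite (Cc z (XU z zX) zI) eqxx in zc.
    * apply: (triv1 _ cI) => x xI; case: (mem x xI) => [e|[e|xX]].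
      -- by move: xI; rewrite e (negbTE uI).
      -- by move: xI; rewrite e wI.
      -- exact: Cc (XU x xX) xI.
Qed.

Lemma splitter (T : finType) (A : rel T) (V K : {set T}) p0 :
  is_tournament A V -> indecomposable A V -> K \subset V -> 2 <= #|K| -> #|K| < #|V| ->
  exists z k, [/\ z \in V, z \notin K, k \in K & A z k != A z p0].
Proof.
move=> tour iV KV h2 hlt.
case: (classic (exists z k, [/\ z \in V, z \notin K, k \in K & A z k != A z p0])) => [//|N].
exfalso; apply: (ind_nt tour (subxx V) iV (K := K)) => //.
apply/itvP; split=> // z p q zV zK pK qK.
have f : forall k, k \in K -> A z k = A z p0.
  move=> k kK; case E: (A z k == A z p0); first exact/eqP.
  by exfalso; apply: N; exists z, k; rewrite E.
by rewrite (f p pK) (f q qK).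
Qed.

Lemma ER (T : finType) (A : rel T) (V X : {set T}) :
  is_tournament A V -> indecomposable A V -> X \subset V -> indecomposable A X ->
  2 <= #|V :\: X| ->
  exists u w, [/\ u \in V, w \in V, u \notin X, w \notin X & u != w] /\
              indecomposable A (u |: (w |: X)).
Proof.
move=> tour iV XV iX hVX.
have X3 := iX.1.
have XltV : #|X| < #|V|.
  move: hVX; rewrite (cardsDS XV) => h.
  by rewrite -subn_gt0; apply: leq_trans h.
have [p0 p0X] : exists p0, p0 \in X.
  by apply/set0Pn; rewrite -card_gt0; apply: leq_trans X3.
case: (classic (exists u0 a, [/\ u0 \in V, u0 \notin X, a \in X & itv A (u0 |: X) [set a; u0]]))
  => [[u0 [a [u0V u0X aX Hu0]]]|Nal].
- set B := a |: [set y in V | (y \notin X) && itv A (y |: X) [set a; y]].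
  have aV := subsetP XV a aX.
  have BV : B \subset V.
    apply/subsetP => x; rewrite !inE => /orP[/eqP->//|/andP[]//].
  have [c cX ca] : exists2 c, c \in X & c != a.
    have : (X :\ a) != set0.
      rewrite -card_gt0; have := cardsD1 a X; rewrite aX => e.
      by move: X3; rewrite e add1n ltnS => /ltnW; apply: leq_trans.
    by case/set0Pn => c; rewrite !inE => /andP[ca cX]; exists c.
  have cB : c \notin B by rewrite !inE (negbTE ca) cX /= andbF.
  have au0 : a != u0 by apply: contraNneq u0X => <-.
  have B2 : 2 <= #|B|.
    have : #|[set a; u0]| <= #|B|.
      apply: subset_leq_card; apply/subsetP => x.
      by rewrite !inE => /orP[]/eqP->; rewrite ?eqxx ?u0V ?u0X ?Hu0 ?orbT.
    by rewrite cards2 au0.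
  have BltV : #|B| < #|V|.
    by apply: proper_card; apply/properP; split=> //; exists c => //; apply: (subsetP XV).
  have [z [b [zV zB bB Hzb]]] := splitter a tour iV BV B2 BltV.
  have ba : b != a by apply: contraNneq Hzb => ->.
  move: bB; rewrite !inE (negbTE ba) /= => /andP[bV /andP[bX Hb]].
  have za : z != a by apply: contraNneq zB => ->; rewrite !inE eqxx.
  have zb : z != b.
    by apply: contraNneq zB => ->; rewrite !inE bV bX Hb orbT.
  have zX : z \notin X.
    apply/negP => zX; move/itvP: Hb => [_ Hb]; move: Hzb; rewrite (Hb z a b) ?eqxx //.
    + by rewrite !inE zX orbT.
    + by rewrite !inE negb_or za zb.
    + by rewrite !inE eqxx.
    + by rewrite !inE eqxx orbT.
  have Hw : ~~ itv A (z |: X) [set a; z].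
    by apply/negP => H; move: zB; rewrite !inE zV zX H orbT.
  exists b, z; split; first by split=> //; rewrite eq_sym.
  apply: (key_lem tour XV bV zV bX zX _ aX iX Hb Hw); first by rewrite eq_sym.
  by rewrite eq_sym.
- have nXa : forall y, y \in V -> y \notin X -> forall a, a \in X -> ~~ itv A (y |: X) [set a; y].
    by move=> y yV yX a aX; apply/negP => H; apply: Nal; exists y, a; split.
  have ext : forall y, y \in V -> y \notin X -> ~~ itv A (y |: X) X -> indecomposable A (y |: X).
    by move=> y yV yX nP; apply: (ext_or tour XV yV yX iX nP); apply: nXa.
  case: (classic (exists u, [/\ u \in V, u \notin X & ~~ itv A (u |: X) X])) => [[u [uV uX nPu]]|N];
    last first.
    exfalso; apply: (ind_nt tour (subxx V) iV (K := X)) => //; last by apply: ltnW.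
    apply/itvP; split=> // z p q zV zX pX qX.
    have : itv A (z |: X) X.
      case E: (itv A (z |: X) X) => //; exfalso; apply: N; exists z; by rewrite E.
    by move/itvP=> [_ H]; apply: H => //; rewrite !inE eqxx.
  have iU := ext u uV uX nPu.
  set W := [set e in V | (e \notin X) && [forall p in X, A e p == A u p]].
  have uW : u \in W by rewrite !inE uV uX /=; apply/forall_inP => p _.
  have Wprop : forall e, e \in W -> [/\ e \in V, e \notin X & forall p, p \in X -> A e p = A u p].
    move=> e; rewrite !inE => /andP[eV /andP[eX /forall_inP H]]; split=> // p pX.
    exact/eqP/H.
  case KV: (X :|: W == V).
  + exfalso.
    have VW : V :\: X \subset W.
      apply/subsetP => x; rewrite inE => /andP[xX xV].
      by move: xV; rewrite -(eqP KV) inE (negbTE xX).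
    have WV : W \subset V by apply/subsetP => e /Wprop[].
    apply: (ind_nt tour (subxx V) iV (K := W)).
    * apply/itvP; split=> // z p q zV zW pW qW.
      have zX : z \in X by move: zV; rewrite -(eqP KV) inE (negbTE zW) orbF.
      have zV' := subsetP XV z zX.
      have [pV pX Hp] := Wprop p pW; have [qV qX Hq] := Wprop q qW.
      have pz : p != z by apply: contraNneq pX => ->.
      have qz : q != z by apply: contraNneq qX => ->.
      by rewrite (AN tour pV zV' pz) (AN tour qV zV' qz) (Hp z zX) (Hq z zX).
    * exact: leq_trans hVX (subset_leq_card VW).
    * apply: proper_card; apply/properP; split=> //; exists p0; first exact: (subsetP XV).
      by apply/negP => /Wprop[_ /negP].
  + set K := X :|: W.
    have KV' : K \subset V.
      by rewrite subUset XV; apply/subsetP => e /Wprop[].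
    have K2 : 2 <= #|K| by apply: leq_trans (ltnW X3) (subset_leq_card (subsetUl X W)).
    have KltV : #|K| < #|V| by apply: proper_card; rewrite properEneq KV KV'.
    have [z [k [zV zK kK Hzk]]] := splitter p0 tour iV KV' K2 KltV.
    have zX : z \notin X by apply: contraNN zK => h; apply/setUP; left.
    have zW : z \notin W by apply: contraNN zK => h; apply/setUP; right.
    case HzP: (itv A (z |: X) X).
    * have kX : k \notin X.
        apply/negP => kX; move/itvP: HzP => [_ H]; move: Hzk; rewrite (H z k p0) ?eqxx //.
        by rewrite !inE eqxx.
      have kW : k \in W by move/setUP: kK => [kX'|//]; rewrite kX' in kX.
      have [kV _ Hk] := Wprop k kW.
      have iK : indecomposable A (k |: X).
        apply: (ext k kV kX); apply/negP => /itvP[_ H]; move/negP: nPu; apply.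
        apply/itvP; split; first exact: subsetUr.
        move=> z' p q; rewrite !inE => /orP[/eqP->|->//] _ pX qX.
        rewrite -(Hk p pX) -(Hk q qX); apply: H => //; by rewrite !inE eqxx.
      have kz : k != z by apply: contraNneq zK => <-.
      exists k, z; split; first by split.
      apply: (EP_lem tour XV kV zV kX zX kz iX iK HzP p0X).
      by rewrite eq_sym.
    * have iZ := ext z zV zX (negbT HzP).
      have : ~~ [forall p in X, A z p == A u p].
        apply/negP => H; move/negP: zW; apply; rewrite inE zV zX; exact: H.
      case/forall_inPn => p pX Hp.
      have uz : u != z by apply: contraNneq zW => <-.
      exists u, z; split; first by split.
      apply: (EE_lem tour XV uV zV uX zX uz iU iZ pX).
      by rewrite eq_sym.
Qed.

Lemma cyc3 (T : finType) (A : rel T) (V : {set T}) v :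
  is_tournament A V -> indecomposable A V -> v \in V -> 4 <= #|V| ->
  exists S : {set T}, [/\ S \subset V, v \in S, #|S| = 3 & indecomposable A S].
Proof.
move=> tour iV vV h4.
set O := [set x in V | (x != v) && A v x].
set In := [set x in V | (x != v) && A x v].
case: (classic (exists p q, [/\ p \in O, q \in In & A p q])) => [[p [q [pO qI Apq]]]|N].
- move: pO qI; rewrite !inE => /andP[pV /andP[pv Avp]] /andP[qV /andP[qv Aqv]].
  have vp : v != p by rewrite eq_sym.
  have vq : v != q by rewrite eq_sym.
  have pq : p != q.
    apply: contraTneq Aqv => <-; by rewrite (AN tour vV pV vp) Avp.
  have Apv : A p v = false by rewrite (AN tour vV pV vp) Avp.
  have Avq : A v q = false by rewrite (AN tour qV vV qv) Aqv.
  have Aqp : A q p = false by rewrite (AN tour pV qV pq) Apq.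
  exists (v |: (p |: [set q])).
  have SV : (v |: (p |: [set q])) \subset V.
    by apply/subsetP => x; rewrite !inE => /orP[/eqP->|/orP[]/eqP->].
  have c3 : #|(v |: (p |: [set q]))| = 3.
    rewrite !cardsU1 cards1 !inE (negbTE vp) (negbTE vq) (negbTE pq) //.
  split=> //; first by rewrite !inE eqxx.
  apply: (triv_indec tour SV); first by rewrite c3.
  move=> I /itvP[IS HI].
  have mem : forall x, x \in I -> x = v \/ x = p \/ x = q.
    by move=> x /(subsetP IS); rewrite !inE => /orP[/eqP|/orP[/eqP|/eqP]]; auto.
  have vS : v \in (v |: (p |: [set q])) by rewrite !inE eqxx.
  have pS : p \in (v |: (p |: [set q])) by rewrite !inE eqxx orbT.
  have qS : q \in (v |: (p |: [set q])) by rewrite !inE eqxx !orbT.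
  case vI: (v \in I); case pI: (p \in I); case qI: (q \in I).
  + apply: trivY => // x; rewrite !inE => /orP[/eqP->//|/orP[]/eqP->//].
  + by exfalso; move: (HI q v p qS (negbT qI) vI pI); rewrite Aqv Aqp.
  + by exfalso; move: (HI p v q pS (negbT pI) vI qI); rewrite Apv Apq.
  + apply: (triv1 _ vI) => x xI; case: (mem x xI) => [//|[e|e]]; by move: xI; rewrite e ?pI ?qI.
  + by exfalso; move: (HI v p q vS (negbT vI) pI qI); rewrite Avp Avq.
  + apply: (triv1 _ pI) => x xI; case: (mem x xI) => [e|[//|e]]; by move: xI; rewrite e ?vI ?qI.
  + apply: (triv1 _ qI) => x xI; case: (mem x xI) => [e|[e|//]]; by move: xI; rewrite e ?vI ?pI.
  + apply: triv0 => x xI; case: (mem x xI) => [e|[e|e]]; by move: xI; rewrite e ?vI ?pI ?qI.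
- have NN : forall p q, p \in O -> q \in In -> A p q = false.
    move=> p q pO qI; case E: (A p q) => //; exfalso; apply: N; exists p, q; by split.
  have OV : O \subset V by apply/subsetP => x; rewrite inE => /andP[].
  have IV : In \subset V by apply/subsetP => x; rewrite inE => /andP[].
  have vO : v \notin O by rewrite inE eqxx andbF.
  have vI : v \notin In by rewrite inE eqxx andbF.
  have small : forall K : {set T}, K \subset V -> v \notin K -> itv A V K -> #|K| <= 1.
    move=> K KV vK HK; case: (ltnP 1 #|K|) => // h; exfalso.
    apply: (ind_nt tour (subxx V) iV HK h).
    by apply: proper_card; apply/properP; split=> //; exists v.
  have cO : #|O| <= 1.
    apply: (small O OV vO); apply/itvP; split=> // z p1 q1 zV zO p1O q1O.
    move: (p1O) (q1O); rewrite !inE => /andP[p1V /andP[_ A1]] /andP[q1V /andP[_ A2]].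
    case: (eqVneq z v) => [->|zv]; first by rewrite A1 A2.
    have zI : z \in In.
      rewrite inE zV zv /= (AN tour vV zV) 1?eq_sym //.
      by apply/negP => Avz; move: zO; rewrite inE zV zv Avz.
    have p1z : p1 != z by apply: contraNneq zO => <-.
    have q1z : q1 != z by apply: contraNneq zO => <-.
    by rewrite (AN tour p1V zV p1z) (AN tour q1V zV q1z) (NN p1 z p1O zI) (NN q1 z q1O zI).
  have cI : #|In| <= 1.
    apply: (small In IV vI); apply/itvP; split=> // z p1 q1 zV zI p1I q1I.
    move: (p1I) (q1I); rewrite !inE => /andP[p1V /andP[p1v A1]] /andP[q1V /andP[q1v A2]].
    case: (eqVneq z v) => [->|zv].
      by rewrite (AN tour p1V vV p1v) (AN tour q1V vV q1v) A1 A2.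
    have zO : z \in O.
      rewrite inE zV zv /= (AN tour zV vV) //.
      by apply/negP => Azv; move: zI; rewrite inE zV zv Azv.
    by rewrite (NN z p1 zO p1I) (NN z q1 zO q1I).
  have VS : V \subset v |: (O :|: In).
    apply/subsetP => x xV; rewrite !inE xV /=.
    case: (eqVneq x v) => //= xv.
    have vx : v != x by rewrite eq_sym.
    by move: (tour v x vV xV vx); case: (A v x); case: (A x v).
  have := subset_leq_card VS; rewrite cardsU1.
  have := cardsUI O In.
  move: cO cI h4; clear; lia.
Qed.

Lemma grow (T : finType) (A : rel T) (V : {set T}) v :
  is_tournament A V -> indecomposable A V -> v \in V -> ~~ odd #|V| ->
  exists w, [/\ w \in V, w != v & indecomposable A (V :\ w)].
Proof.
move=> tour iV vV hev.
have h4 : 4 <= #|V|.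
  by move: iV.1 hev; case: #|V| => [|[|[|[|n]]]].
suff main : forall k (S : {set T}), #|V :\: S| <= k -> S \subset V -> v \in S -> odd #|S| ->
    indecomposable A S -> exists w, [/\ w \in V, w != v & indecomposable A (V :\ w)].
  have [S [SV vS c3 iS]] := cyc3 tour iV vV h4.
  by apply: (main _ S (leqnn _) SV vS) => //; rewrite c3.
elim=> [|k IH] S hk SV vS oS iS.
  exfalso; move: hk; rewrite leqn0 (cardsDS SV) subn_eq0 => h.
  have e : #|S| = #|V| by apply/eqP; rewrite eqn_leq h subset_leq_card.
  by move: oS hev; rewrite e => ->.
case: (ltnP 1 #|V :\: S|) => h.
- have [u [w [[uV wV uS wS uw] iY]]] := ER tour iV SV iS h.
  have uwS : u \notin w |: S by rewrite !inE negb_or uw uS.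
  have cY : #|u |: (w |: S)| = #|S|.+2 by rewrite !cardsU1 uwS wS.
  have YV : u |: (w |: S) \subset V by rewrite !subUset !sub1set uV wV SV.
  apply: (IH (u |: (w |: S))) => //.
  + move: hk; rewrite !cardsDS // cY; clear; lia.
  + by rewrite !inE vS !orbT.
  + by rewrite cY /= negbK.
- have h1 : #|V :\: S| == 1.
    rewrite eqn_leq h /=; rewrite lt0n; apply/negP => /eqP h0.
    move/eqP: h0; rewrite (cardsDS SV) subn_eq0 => h0.
    have e : #|S| = #|V| by apply/eqP; rewrite eqn_leq h0 subset_leq_card.
    by move: oS hev; rewrite e => ->.
  case/cards1P: h1 => w E.
  have wVS : w \in V :\: S by rewrite E set11.
  move: (wVS); rewrite inE => /andP[wS wV].
  exists w; split=> //; first by apply: contraNneq wS => ->.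
  suff -> : V :\ w = S by [].
  apply/setP => x; rewrite !inE.
  move/setP: (E) => /(_ x); rewrite !inE => Ex.
  case xS: (x \in S); case xV: (x \in V); case xw: (x == w) => //=; move: Ex; rewrite ?xS ?xV ?xw //=.
  by have := subsetP SV x; rewrite xS xV => /(_ isT).
Qed.

Theorem mainTheorem9 (T : finType) (A : rel T) (V : {set T}) :
  is_tournament A V ->
  indecomposable A V ->
  5 <= #|V| ->
  (forall x y, non_critical A V x -> non_critical A V y -> x = y) ->
  odd #|V|.
Proof.
move=> tour iV h5 H; apply/contraT => hev.
have [v0 v0V] : exists v0, v0 \in V.
  by apply/set0Pn; rewrite -card_gt0; apply: leq_trans h5.
have [w1 [w1V _ i1]] := grow tour iV v0V hev.
have [w2 [w2V w21 i2]] := grow tour iV w1V hev.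
have e := H w2 w1 (conj w2V (fun c => c i2)) (conj w1V (fun c => c i1)).
by rewrite e eqxx in w21.
Qed.
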